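(* Let $\mathcal{C}$ be a category that has finite biproducts, and let $X$ be an object of $\mathcal{C}$. Then $X$ is abelian if and only if the diagonal $\Delta \colon X \to X \oplus X$ is a kernel of some split epimorphism.
   Context: A category has finite biproducts if it has a zero object and every pair of objects has a biproduct, i.e. an object $X_1\oplus X_2$ with injections $i_k$ and projections $p_k$ such that $(X_1\oplus X_2,i_1,i_2)$ is a coproduct, $(X_1\oplus X_2,p_1,p_2)$ is a product, $p_k i_k = 1$ and $p_k i_j = 0$ for $j\ne k$. Such a category has a unique enrichment in commutative monoids, where $0$ is the zero morphism and $f+g = \nabla (f\oplus g)\Delta$ (with $\Delta=\begin{bmatrix}1\\1\end{bmatrix}$ the diagonal and $\nabla=\begin{bmatrix}1&1\end{bmatrix}$ the codiagonal). An object $X$ is called abelian if $1\colon X\to X$ has an additive inverse with respect to this enrichment. A kernel of $f\colon Y\to Z$ is an equaliser of $f$ and the zero morphism $0\colon Y\to Z$. *)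

(* Defs.v *)
Set Implicit Arguments.
Unset Strict Implicit.

Record Category := {
  Obj :> Type;
  Hom : Obj -> Obj -> Type;
  idm : forall A : Obj, Hom A A;
  comp : forall A B C : Obj, Hom B C -> Hom A B -> Hom A C;
  comp_assoc : forall (A B C D : Obj) (h : Hom C D) (g : Hom B C) (f : Hom A B),
      comp h (comp g f) = comp (comp h g) f;
  comp_id_l : forall (A B : Obj) (f : Hom A B), comp (idm B) f = f;
  comp_id_r : forall (A B : Obj) (f : Hom A B), comp f (idm A) = f
}.

Arguments Hom {C} : rename.
Arguments idm {C} : rename.
Arguments comp {C A B C0} : rename.

Notation "g \o f" := (comp g f) (at level 40, left associativity).

Section Defs.
Variable C : Category.

Record ZeroObject := {
  zobj : Obj C;
  to_zero : forall A : Obj C, Hom A zobj;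
  to_zero_uniq : forall (A : Obj C) (f : Hom A zobj), f = to_zero A;
  from_zero : forall A : Obj C, Hom zobj A;
  from_zero_uniq : forall (A : Obj C) (f : Hom zobj A), f = from_zero A
}.

Definition zero_mor (Z : ZeroObject) (A B : Obj C) : Hom A B :=
  from_zero Z B \o to_zero Z A.

Record Biproduct (Z : ZeroObject) (X1 X2 : Obj C) := {
  bobj : Obj C;
  inj1 : Hom X1 bobj;
  inj2 : Hom X2 bobj;
  proj1 : Hom bobj X1;
  proj2 : Hom bobj X2;
  copair : forall Y : Obj C, Hom X1 Y -> Hom X2 Y -> Hom bobj Y;
  copair_inj1 : forall Y (f1 : Hom X1 Y) (f2 : Hom X2 Y), copair f1 f2 \o inj1 = f1;
  copair_inj2 : forall Y (f1 : Hom X1 Y) (f2 : Hom X2 Y), copair f1 f2 \o inj2 = f2;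
  copair_uniq : forall Y (f1 : Hom X1 Y) (f2 : Hom X2 Y) (h : Hom bobj Y),
      h \o inj1 = f1 -> h \o inj2 = f2 -> h = copair f1 f2;
  pair : forall Y : Obj C, Hom Y X1 -> Hom Y X2 -> Hom Y bobj;
  pair_proj1 : forall Y (f1 : Hom Y X1) (f2 : Hom Y X2), proj1 \o pair f1 f2 = f1;
  pair_proj2 : forall Y (f1 : Hom Y X1) (f2 : Hom Y X2), proj2 \o pair f1 f2 = f2;
  pair_uniq : forall Y (f1 : Hom Y X1) (f2 : Hom Y X2) (h : Hom Y bobj),
      proj1 \o h = f1 -> proj2 \o h = f2 -> h = pair f1 f2;
  proj1_inj1 : proj1 \o inj1 = idm X1;
  proj2_inj2 : proj2 \o inj2 = idm X2;
  proj1_inj2 : proj1 \o inj2 = zero_mor Z X2 X1;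
  proj2_inj1 : proj2 \o inj1 = zero_mor Z X1 X2
}.

Record FiniteBiproducts := {
  fb_zero : ZeroObject;
  fb_biprod : forall X1 X2 : Obj C, Biproduct fb_zero X1 X2
}.

Variable FB : FiniteBiproducts.

Definition oplus (X1 X2 : Obj C) : Obj C := bobj (fb_biprod FB X1 X2).

Definition zero (A B : Obj C) : Hom A B := zero_mor (fb_zero FB) A B.

Definition diag (X : Obj C) : Hom X (oplus X X) :=
  pair (fb_biprod FB X X) (idm X) (idm X).
Definition codiag (X : Obj C) : Hom (oplus X X) X :=
  copair (fb_biprod FB X X) (idm X) (idm X).

Definition biprod_map (A A' B B' : Obj C) (f : Hom A B) (g : Hom A' B') :
    Hom (oplus A A') (oplus B B') :=
  pair (fb_biprod FB B B') (f \o proj1 (fb_biprod FB A A'))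
                           (g \o proj2 (fb_biprod FB A A')).

Definition hom_add (A B : Obj C) (f g : Hom A B) : Hom A B :=
  codiag B \o biprod_map f g \o diag A.

Definition abelian_obj (X : Obj C) : Prop :=
  exists g : Hom X X, hom_add (idm X) g = zero X X /\ hom_add g (idm X) = zero X X.

Definition is_kernel (K Y W : Obj C) (k : Hom K Y) (f : Hom Y W) : Prop :=
  f \o k = zero Y W \o k /\
  forall (T : Obj C) (h : Hom T Y), f \o h = zero Y W \o h ->
    exists! u : Hom T K, k \o u = h.

Definition split_epi (A B : Obj C) (e : Hom A B) : Prop :=
  exists s : Hom B A, e \o s = idm B.

End Defs.

(* Main.v *)
Require Import Defs.

Section L.
Variables (C : Category) (FB : FiniteBiproducts C).
Notation BP A B := (fb_biprod FB A B).
Notation z := (zero FB).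
Notation "f + g" := (hom_add FB f g).

Lemma zero_l (A B D : Obj C) (f : Hom A B) : z B D \o f = z A D.
Proof. unfold zero, zero_mor. rewrite <- comp_assoc. f_equal. apply to_zero_uniq. Qed.

Lemma zero_r (A B D : Obj C) (f : Hom B D) : f \o z A B = z A D.
Proof. unfold zero, zero_mor. rewrite comp_assoc. f_equal. apply from_zero_uniq. Qed.

Lemma p1i1 A B : proj1 (BP A B) \o inj1 (BP A B) = idm A.
Proof. apply proj1_inj1. Qed.
Lemma p2i2 A B : proj2 (BP A B) \o inj2 (BP A B) = idm B.
Proof. apply proj2_inj2. Qed.
Lemma p1i2 A B : proj1 (BP A B) \o inj2 (BP A B) = z B A.
Proof. apply proj1_inj2. Qed.
Lemma p2i1 A B : proj2 (BP A B) \o inj1 (BP A B) = z A B.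
Proof. apply proj2_inj1. Qed.

Lemma pair_f0 T Y1 Y2 (f : Hom T Y1) : pair (BP Y1 Y2) f (z T Y2) = inj1 (BP Y1 Y2) \o f.
Proof.
  symmetry; apply pair_uniq.
  - rewrite comp_assoc, p1i1, comp_id_l; reflexivity.
  - rewrite comp_assoc, p2i1, zero_l; reflexivity.
Qed.

Lemma pair_0g T Y1 Y2 (g : Hom T Y2) : pair (BP Y1 Y2) (z T Y1) g = inj2 (BP Y1 Y2) \o g.
Proof.
  symmetry; apply pair_uniq.
  - rewrite comp_assoc, p1i2, zero_l; reflexivity.
  - rewrite comp_assoc, p2i2, comp_id_l; reflexivity.
Qed.

Lemma pair_comp S T Y1 Y2 (f : Hom T Y1) (g : Hom T Y2) (h : Hom S T) :
  pair (BP Y1 Y2) f g \o h = pair (BP Y1 Y2) (f \o h) (g \o h).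
Proof.
  apply pair_uniq.
  - rewrite comp_assoc, pair_proj1; reflexivity.
  - rewrite comp_assoc, pair_proj2; reflexivity.
Qed.

Lemma copair_comp A1 A2 Y V (f : Hom A1 Y) (g : Hom A2 Y) (k : Hom Y V) :
  k \o copair (BP A1 A2) f g = copair (BP A1 A2) (k \o f) (k \o g).
Proof.
  apply copair_uniq.
  - rewrite <- comp_assoc, copair_inj1; reflexivity.
  - rewrite <- comp_assoc, copair_inj2; reflexivity.
Qed.

Lemma bm_pair T A A' B B' (f : Hom A B) (g : Hom A' B') (x : Hom T A) (y : Hom T A') :
  biprod_map FB f g \o pair (BP A A') x y = pair (BP B B') (f \o x) (g \o y).
Proof.
  unfold biprod_map, oplus. rewrite pair_comp, <- !comp_assoc, pair_proj1, pair_proj2.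
  reflexivity.
Qed.

Lemma codiag_bm A A' Y (a : Hom A Y) (b : Hom A' Y) :
  codiag FB Y \o biprod_map FB a b = copair (BP A A') a b.
Proof.
  apply copair_uniq.
  - unfold biprod_map, oplus. rewrite <- comp_assoc, pair_comp, <- !comp_assoc, p1i1, p2i1,
      comp_id_r, zero_r, pair_f0, comp_assoc. unfold codiag.
    rewrite copair_inj1, comp_id_l. reflexivity.
  - unfold biprod_map, oplus. rewrite <- comp_assoc, pair_comp, <- !comp_assoc, p1i2, p2i2,
      comp_id_r, zero_r, pair_0g, comp_assoc. unfold codiag.
    rewrite copair_inj2, comp_id_l. reflexivity.
Qed.

Lemma add_pair T Y (f g : Hom T Y) : f + g = codiag FB Y \o pair (BP Y Y) f g.
Proof.
  unfold hom_add. rewrite <- comp_assoc. unfold diag at 1. rewrite bm_pair, !comp_id_r.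
  reflexivity.
Qed.

Lemma M T A A' Y (a : Hom A Y) (b : Hom A' Y) (x : Hom T A) (y : Hom T A') :
  copair (BP A A') a b \o pair (BP A A') x y = (a \o x) + (b \o y).
Proof.
  rewrite add_pair, <- bm_pair, comp_assoc, codiag_bm. reflexivity.
Qed.

Lemma add_copair T Y (a b : Hom T Y) : a + b = copair (BP T T) a b \o diag FB T.
Proof. unfold diag. rewrite M, !comp_id_r. reflexivity. Qed.

Lemma add_0r T Y (f : Hom T Y) : f + z T Y = f.
Proof.
  rewrite add_pair, pair_f0, comp_assoc. unfold codiag. rewrite copair_inj1, comp_id_l.
  reflexivity.
Qed.

Lemma add_0l T Y (f : Hom T Y) : z T Y + f = f.
Proof.
  rewrite add_pair, pair_0g, comp_assoc. unfold codiag. rewrite copair_inj2, comp_id_l.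
  reflexivity.
Qed.

Lemma pc_cp T Y (a b c d : Hom T Y) :
  pair (BP Y Y) (copair (BP T T) a b) (copair (BP T T) c d)
  = copair (BP T T) (pair (BP Y Y) a c) (pair (BP Y Y) b d).
Proof.
  symmetry. apply pair_uniq.
  - rewrite copair_comp, !pair_proj1. reflexivity.
  - rewrite copair_comp, !pair_proj2. reflexivity.
Qed.

Lemma interchange T Y (a b c d : Hom T Y) : (a + b) + (c + d) = (a + c) + (b + d).
Proof.
  rewrite (add_pair _ _ (a + b)), (add_copair _ _ a b), (add_copair _ _ c d), <- pair_comp, pc_cp.
  rewrite (add_copair _ _ (a + c)), (add_pair _ _ a c), (add_pair _ _ b d), <- copair_comp.
  rewrite comp_assoc. reflexivity.
Qed.

Lemma add_assoc T Y (a b c : Hom T Y) : (a + b) + c = a + (b + c).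
Proof.
  transitivity ((a + b) + (z T Y + c)); [rewrite add_0l; reflexivity|].
  rewrite interchange, add_0r. reflexivity.
Qed.

Lemma add_comm T Y (a b : Hom T Y) : a + b = b + a.
Proof.
  transitivity ((z T Y + a) + (b + z T Y)); [rewrite add_0l, add_0r; reflexivity|].
  rewrite interchange.
  rewrite add_0l, add_0r. reflexivity.
Qed.

Lemma comp_add_l T Y V (f g : Hom T Y) (k : Hom Y V) : k \o (f + g) = (k \o f) + (k \o g).
Proof. rewrite !add_copair, comp_assoc, copair_comp. reflexivity. Qed.

Lemma comp_add_r S T Y (f g : Hom T Y) (h : Hom S T) : (f + g) \o h = (f \o h) + (g \o h).
Proof. rewrite !add_pair. unfold oplus. rewrite <- comp_assoc, pair_comp. reflexivity. Qed.

End L.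

Theorem theorem3p3 (C : Category) (FB : FiniteBiproducts C) (X : Obj C) :
  abelian_obj FB X <->
  exists (W : Obj C) (e : Hom (oplus FB X X) W),
    split_epi e /\ is_kernel FB (diag FB X) e.
Proof.
  split.
  - intros [g [H1 H2]]. unfold oplus in *.
    exists X, (copair (fb_biprod FB X X) (idm X) g). split.
    + exists (inj1 (fb_biprod FB X X)). apply copair_inj1.
    + split.
      * rewrite zero_l. unfold diag. rewrite M, !comp_id_l, comp_id_r. exact H1.
      * intros T h Hh. rewrite zero_l in Hh.
        set (h1 := proj1 (fb_biprod FB X X) \o h).
        set (h2 := proj2 (fb_biprod FB X X) \o h).
        assert (Eh : h = pair (fb_biprod FB X X) h1 h2) by (apply pair_uniq; reflexivity).
        rewrite Eh, M, comp_id_l in Hh.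
        assert (E12 : h1 = h2).
        { rewrite <- (add_0r _ FB _ _ h1). rewrite <- (zero_l _ FB _ _ X h2), <- H2, comp_add_r, comp_id_l.
          rewrite <- add_assoc, Hh, add_0l. reflexivity. }
        exists h1. split.
        -- unfold diag. rewrite pair_comp, !comp_id_l, Eh, <- E12. reflexivity.
        -- intros u Hu. unfold h1. rewrite <- Hu. unfold diag.
           rewrite comp_assoc, pair_proj1, comp_id_l. reflexivity.
  - intros [W [e [[s Hs] [Hk Hu]]]]. unfold oplus in *.
    set (a := e \o inj1 (fb_biprod FB X X)). set (b := e \o inj2 (fb_biprod FB X X)).
    assert (Hd : diag FB X = hom_add FB (inj1 (fb_biprod FB X X)) (inj2 (fb_biprod FB X X))).
    { assert (E : copair (fb_biprod FB X X) (inj1 (fb_biprod FB X X)) (inj2 (fb_biprod FB X X)) = idm _).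
      { symmetry. apply copair_uniq; apply comp_id_l. }
      rewrite add_copair, E, comp_id_l. reflexivity. }
    assert (Hab : hom_add FB a b = zero FB X W).
    { unfold a, b. rewrite <- comp_add_l, <- Hd, Hk, zero_l. reflexivity. }
    set (v := hom_add FB (inj1 (fb_biprod FB X X)) (s \o b)).
    assert (Hv : e \o v = zero FB _ W \o v).
    { unfold v. rewrite comp_add_l, zero_l, comp_assoc, Hs, comp_id_l. exact Hab. }
    destruct (Hu X v Hv) as [u [Hdu _]].
    assert (K1 : proj1 (fb_biprod FB X X) \o v = u).
    { rewrite <- Hdu. unfold diag. rewrite comp_assoc, pair_proj1, comp_id_l. reflexivity. }
    assert (K2 : proj2 (fb_biprod FB X X) \o v = u).
    { rewrite <- Hdu. unfold diag. rewrite comp_assoc, pair_proj2, comp_id_l. reflexivity. }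
    unfold v in K1, K2. rewrite comp_add_l in K1, K2.
    rewrite p1i1 in K1. rewrite p2i1, add_0l in K2.
    assert (Key : hom_add FB (idm X) ((proj1 (fb_biprod FB X X) \o s) \o b) = (proj2 (fb_biprod FB X X) \o s) \o b).
    { rewrite <- !comp_assoc. rewrite K1, K2. reflexivity. }
    assert (H1 : hom_add FB (idm X) (hom_add FB ((proj1 (fb_biprod FB X X) \o s) \o b) ((proj2 (fb_biprod FB X X) \o s) \o a))
                 = zero FB X X).
    { rewrite <- add_assoc, Key, <- comp_add_l, add_comm, Hab, zero_r. reflexivity. }
    exists (hom_add FB ((proj1 (fb_biprod FB X X) \o s) \o b) ((proj2 (fb_biprod FB X X) \o s) \o a)). split.
    + exact H1.
    + rewrite add_comm. exact H1.
Qed.
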